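(* Let $(\mathcal A;\mathcal E)$ be an exact category and let $\mathcal J_1,\mathcal J_2$ be special preenveloping ideals of $\mathcal A$. Then $\mathcal J_1\cap\mathcal J_2$ is a special preenveloping ideal. Moreover, if $B\in\mathcal A$, $m^1:B\to C^1$ is a special $\mathcal J_1$-preenvelope of $B$ and $m^2:B\to C^2$ is a special $\mathcal J_2$-preenvelope of $B$, then the pushout $m^1\amalg_B m^2: B\to C^1\amalg_B C^2$ is a special $(\mathcal J_1\cap\mathcal J_2)$-preenvelope of $B$.
   Context: $(\mathcal A;\mathcal E)$ is an exact category: an additive category with a class $\mathcal E$ of kernel–cokernel pairs (conflations) $X\xrightarrow{m}Y\xrightarrow{p}Z$ ($m$ an inflation, $p$ a deflation) satisfying the Quillen–Keller axioms. $\mathrm{Ext}(A,B)$ denotes the group of (equivalence classes of) conflations $B\to C\to A$. An ideal $\mathcal J$ of $\mathcal A$ is a family of subgroups $\mathcal J(A,B)\subseteq\mathrm{Hom}(A,B)$ closed under composition on either side with arbitrary morphisms. For morphisms $a:A_0\to A_1$ and $b:B_0\to B_1$, let $\mathrm{Ext}(a,b):\mathrm{Ext}(A_1,B_0)\to\mathrm{Ext}(A_0,B_1)$ be the map sending a conflation to its pushout along $b$ followed by pullback along $a$ (the diagonal of the commutative square formed by $\mathrm{Ext}(A_1,b),\mathrm{Ext}(a,B_0),\mathrm{Ext}(a,B_1),\mathrm{Ext}(A_0,b)$); $a,b$ are Ext-orthogonal if $\mathrm{Ext}(a,b)=0$. For a class $\mathcal M$ of morphisms, ${}^\perp\mathcal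 M$ is the ideal of morphisms $a$ with $\mathrm{Ext}(a,m)=0$ for all $m\in\mathcal M$. A special $\mathcal J$-preenvelope of an object $B$ is a morphism $j:B\to C_0$ in $\mathcal J$ for which there exist conflations $B\xrightarrow{j}C_0\to A_0$ and $B\to C_1\to A_1$ and a morphism of conflations between them with components $1_B$, some $c:C_0\to C_1$, and some $a:A_0\to A_1$ with $a\in{}^\perp\mathcal J$. The ideal $\mathcal J$ is special preenveloping if every object of $\mathcal A$ has a special $\mathcal J$-preenvelope. *)

(* Defs.v *)
From HB Require Import structures.
From mathcomp Require Import all_boot all_algebra.
Set Implicit Arguments. Unset Strict Implicit. Unset Printing Implicit Defensive.
Import GRing.Theory.
Local Open Scope ring_scope.

Record PreCat := {
  cObj : Type;
  chom : cObj -> cObj -> zmodType;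
  comp : forall A B C : cObj, chom B C -> chom A B -> chom A C;
  idm : forall A : cObj, chom A A }.

Arguments comp {p A B C}.
Arguments idm {p}.
Notation "g \o_ f" := (comp g f) (at level 40, left associativity) : ring_scope.

Section Basic.
Variable C : PreCat.
Local Notation chom := (@chom C).
Local Notation cObj := (cObj C).

Definition is_iso (A B : cObj) (f : chom A B) : Prop :=
  exists g : chom B A, g \o_ f = idm A /\ f \o_ g = idm B.

Definition is_kernel (X Y Z : cObj) (m : chom X Y) (p : chom Y Z) : Prop :=
  p \o_ m = 0 /\
  forall (T : cObj) (f : chom T Y), p \o_ f = 0 ->
    exists g : chom T X, m \o_ g = f /\ forall g' : chom T X, m \o_ g' = f -> g' = g.

Definition is_cokernel (X Y Z : cObj) (m : chom X Y) (p : chom Y Z) : Prop :=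
  p \o_ m = 0 /\
  forall (T : cObj) (f : chom Y T), f \o_ m = 0 ->
    exists g : chom Z T, g \o_ p = f /\ forall g' : chom Z T, g' \o_ p = f -> g' = g.

Definition is_pushout (B C1 C2 P : cObj) (f : chom B C1) (g : chom B C2)
    (u1 : chom C1 P) (u2 : chom C2 P) : Prop :=
  u1 \o_ f = u2 \o_ g /\
  forall (T : cObj) (x1 : chom C1 T) (x2 : chom C2 T), x1 \o_ f = x2 \o_ g ->
    exists h : chom P T, (h \o_ u1 = x1 /\ h \o_ u2 = x2) /\
      forall h' : chom P T, h' \o_ u1 = x1 /\ h' \o_ u2 = x2 -> h' = h.

Definition is_pullback (B C1 C2 P : cObj) (f : chom C1 B) (g : chom C2 B)
    (v1 : chom P C1) (v2 : chom P C2) : Prop :=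
  f \o_ v1 = g \o_ v2 /\
  forall (T : cObj) (x1 : chom T C1) (x2 : chom T C2), f \o_ x1 = g \o_ x2 ->
    exists h : chom T P, (v1 \o_ h = x1 /\ v2 \o_ h = x2) /\
      forall h' : chom T P, v1 \o_ h' = x1 /\ v2 \o_ h' = x2 -> h' = h.

Definition is_zero_object (Z : cObj) : Prop :=
  (forall A (f g : chom Z A), f = g) /\ (forall A (f g : chom A Z), f = g).

Definition preadditive_axioms : Prop :=
  (forall A B D E (h : chom D E) (g : chom B D) (f : chom A B),
      h \o_ (g \o_ f) = (h \o_ g) \o_ f) /\
  (forall A B (f : chom A B), idm B \o_ f = f) /\
  (forall A B (f : chom A B), f \o_ idm A = f) /\
  (forall A B D (g g' : chom B D) (f : chom A B), (g + g') \o_ f = g \o_ f + g' \o_ f) /\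
  (forall A B D (g : chom B D) (f f' : chom A B), g \o_ (f + f') = g \o_ f + g \o_ f').

Definition additive_axioms : Prop :=
  preadditive_axioms /\
  (exists Z : cObj, is_zero_object Z) /\
  (forall A B : cObj, exists (S : cObj) (i1 : chom A S) (i2 : chom B S)
        (p1 : chom S A) (p2 : chom S B),
      p1 \o_ i1 = idm A /\ p2 \o_ i2 = idm B /\ p2 \o_ i1 = 0 /\ p1 \o_ i2 = 0 /\
      i1 \o_ p1 + i2 \o_ p2 = idm S).

Definition confl_class := forall X Y Z : cObj, chom X Y -> chom Y Z -> Prop.

Definition inflation (E : confl_class) (X Y : cObj) (m : chom X Y) : Prop :=
  exists (Z : cObj) (p : chom Y Z), E X Y Z m p.
Definition deflation (E : confl_class) (Y Z : cObj) (p : chom Y Z) : Prop :=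
  exists (X : cObj) (m : chom X Y), E X Y Z m p.

(* Quillen--Keller axioms (as in Buehler, "Exact categories", Def. 2.1) *)
Definition exact_axioms (E : confl_class) : Prop :=
  (forall X Y Z (m : chom X Y) (p : chom Y Z), E X Y Z m p ->
      is_kernel m p /\ is_cokernel m p) /\
  (forall X Y Z (m : chom X Y) (p : chom Y Z) X' Y' Z' (m' : chom X' Y') (p' : chom Y' Z')
      (x : chom X X') (y : chom Y Y') (z : chom Z Z'),
      E X Y Z m p -> is_iso x -> is_iso y -> is_iso z ->
      y \o_ m = m' \o_ x -> z \o_ p = p' \o_ y -> E X' Y' Z' m' p') /\
  (forall A, deflation E (idm A)) /\ (forall A, inflation E (idm A)) /\
  (forall A B D (p : chom A B) (q : chom B D),
      deflation E p -> deflation E q -> deflation E (q \o_ p)) /\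
  (forall A B D (m : chom A B) (n : chom B D),
      inflation E m -> inflation E n -> inflation E (n \o_ m)) /\
  (forall A B A' (m : chom A B) (f : chom A A'), inflation E m ->
      exists (P : cObj) (m' : chom A' P) (f' : chom B P),
        is_pushout m f f' m' /\ inflation E m') /\
  (forall B D D' (p : chom B D) (f : chom D' D), deflation E p ->
      exists (P : cObj) (p' : chom P D') (f' : chom P B),
        is_pullback p f f' p' /\ deflation E p').

End Basic.

Record ExactCat := {
  ecat :> PreCat;
  conflation : confl_class ecat;
  ecat_additive : additive_axioms ecat;
  ecat_exact : exact_axioms conflation }.

Arguments conflation {e X Y Z}.

Section Ideals.
Variable C : ExactCat.
Local Notation chom := (@chom C).
Local Notation cObj := (cObj C).

Definition is_ideal (J : forall A B : cObj, chom A B -> Prop) : Prop :=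
  (forall A B, J A B 0) /\
  (forall A B (f g : chom A B), J A B f -> J A B g -> J A B (f - g)) /\
  (forall A B D (g : chom B D) (f : chom A B), J A B f -> J A D (g \o_ f)) /\
  (forall A B D (g : chom B D) (f : chom A B), J B D g -> J A D (g \o_ f)).

Record ideal := { idl :> forall A B : cObj, chom A B -> Prop; idl_ideal : is_ideal idl }.

Definition ideal_cap (J1 J2 : ideal) : forall A B : cObj, chom A B -> Prop :=
  fun A B f => J1 A B f /\ J2 A B f.

Definition split_conflation (X Y Z : cObj) (m : chom X Y) (p : chom Y Z) : Prop :=
  exists r : chom Y X, r \o_ m = idm X.

(* Ext(a,b) = 0 for a : A0 -> A1, b : B0 -> B1: for every conflation
   E : B0 -> C -> A1, the class of a^* b_* E (pushout along b, then pullback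
   along a) is zero, i.e. the resulting conflation splits.  b_* E is any
   conflation F : B1 -> D -> A1 receiving a morphism of conflations (b, c, 1)
   from E; a^* F is any conflation G : B1 -> X -> A0 with a morphism of
   conflations (1, x, a) to F.  (These exist and are unique up to equivalence.) *)
Definition ext_zero (A0 A1 B0 B1 : cObj) (a : chom A0 A1) (b : chom B0 B1) : Prop :=
  forall (Cc : cObj) (i : chom B0 Cc) (q : chom Cc A1), conflation i q ->
  forall (D : cObj) (i' : chom B1 D) (q' : chom D A1), conflation i' q' ->
  forall c : chom Cc D, c \o_ i = i' \o_ b -> q' \o_ c = idm A1 \o_ q ->
  forall (X : cObj) (i'' : chom B1 X) (q'' : chom X A0), conflation i'' q'' ->
  forall x : chom X D, x \o_ i'' = i' \o_ idm B1 -> q' \o_ x = a \o_ q'' ->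
  split_conflation i'' q''.

Definition ext_perp (M : forall A B : cObj, chom A B -> Prop)
    (A0 A1 : cObj) (a : chom A0 A1) : Prop :=
  forall (B0 B1 : cObj) (m : chom B0 B1), M B0 B1 m -> ext_zero a m.

Definition special_preenvelope (J : forall A B : cObj, chom A B -> Prop)
    (B C0 : cObj) (j : chom B C0) : Prop :=
  J B C0 j /\
  exists (A0 : cObj) (p0 : chom C0 A0), conflation j p0 /\
  exists (C1 A1 : cObj) (m1 : chom B C1) (p1 : chom C1 A1), conflation m1 p1 /\
  exists (c : chom C0 C1) (a : chom A0 A1),
    c \o_ j = m1 \o_ idm B /\ a \o_ p0 = p1 \o_ c /\ ext_perp J a.

Definition special_preenveloping (J : forall A B : cObj, chom A B -> Prop) : Prop :=
  forall B : cObj, exists (C0 : cObj) (j : chom B C0), special_preenvelope J j.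

End Ideals.

(* Main.v *)
Require Import Defs.
From mathcomp Require Import all_boot all_algebra.
Set Implicit Arguments. Unset Strict Implicit. Unset Printing Implicit Defensive.
Import GRing.Theory.
Local Open Scope ring_scope.

Section Lemmas.
Variable C : ExactCat.
Local Notation O := (cObj (ecat C)).
Local Notation H := (@chom (ecat C)).

Lemma compA {A B D E : O} (h : H D E) (g : H B D) (f : H A B) :
  h \o_ (g \o_ f) = (h \o_ g) \o_ f.
Proof. by case: (ecat_additive C) => [[hA _] _]; apply: hA. Qed.
Lemma comp1l {A B : O} (f : H A B) : idm B \o_ f = f.
Proof. by case: (ecat_additive C) => [[_ [h _]] _]; apply: h. Qed.
Lemma comp1r {A B : O} (f : H A B) : f \o_ idm A = f.
Proof. by case: (ecat_additive C) => [[_ [_ [h _]]] _]; apply: h. Qed.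
Lemma compDl {A B D : O} (g g' : H B D) (f : H A B) :
  (g + g') \o_ f = g \o_ f + g' \o_ f.
Proof. by case: (ecat_additive C) => [[_ [_ [_ [h _]]]] _]; apply: h. Qed.
Lemma compDr {A B D : O} (g : H B D) (f f' : H A B) :
  g \o_ (f + f') = g \o_ f + g \o_ f'.
Proof. by case: (ecat_additive C) => [[_ [_ [_ [_ h]]]] _]; apply: h. Qed.
Lemma comp0l {A B D : O} (f : H A B) : (0 : H B D) \o_ f = 0.
Proof.
have := compDl (0 : H B D) 0 f; rewrite addr0 => E.
move/(congr1 (fun z => z - (0 : H B D) \o_ f)): E.
by rewrite subrr addrK => ->.
Qed.
Lemma comp0r {A B D : O} (g : H B D) : g \o_ (0 : H A B) = 0.
Proof.
have := compDr g (0 : H A B) 0; rewrite addr0 => E.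
move/(congr1 (fun z => z - g \o_ (0 : H A B))): E.
by rewrite subrr addrK => ->.
Qed.
Lemma compNl {A B D : O} (g : H B D) (f : H A B) : (- g) \o_ f = - (g \o_ f).
Proof. by apply/eqP; rewrite -addr_eq0 -compDl addNr comp0l. Qed.
Lemma compNr {A B D : O} (g : H B D) (f : H A B) : g \o_ (- f) = - (g \o_ f).
Proof. by apply/eqP; rewrite -addr_eq0 -compDr addNr comp0r. Qed.
Lemma compBl {A B D : O} (g g' : H B D) (f : H A B) :
  (g - g') \o_ f = g \o_ f - g' \o_ f.
Proof. by rewrite compDl compNl. Qed.
Lemma compBr {A B D : O} (g : H B D) (f f' : H A B) :
  g \o_ (f - f') = g \o_ f - g \o_ f'.
Proof. by rewrite compDr compNr. Qed.

Lemma conf_kc {X Y Z : O} (m : H X Y) (p : H Y Z) :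
  conflation m p -> is_kernel m p /\ is_cokernel m p.
Proof. by case: (ecat_exact C) => h _; apply: h. Qed.
Lemma conf0 {X Y Z : O} (m : H X Y) (p : H Y Z) : conflation m p -> p \o_ m = 0.
Proof. by move/conf_kc => [[h _] _]. Qed.

Lemma ker_mono {X Y Z T : O} (m : H X Y) (p : H Y Z) (f g : H T X) :
  is_kernel m p -> m \o_ f = m \o_ g -> f = g.
Proof.
case=> pm0 hk e.
have [h0 [_ hu]] := hk T (m \o_ f) ltac:(by rewrite compA pm0 comp0l).
by rewrite (hu f erefl) (hu g (esym e)).
Qed.
Lemma ker_lift {X Y Z T : O} (m : H X Y) (p : H Y Z) (f : H T Y) :
  is_kernel m p -> p \o_ f = 0 -> exists g : H T X, m \o_ g = f.
Proof. by case=> _ hk e; have [g [eg _]] := hk T f e; exists g. Qed.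
Lemma coker_epi {X Y Z T : O} (m : H X Y) (p : H Y Z) (f g : H Z T) :
  is_cokernel m p -> f \o_ p = g \o_ p -> f = g.
Proof.
case=> pm0 hk e.
have [h0 [_ hu]] := hk T (f \o_ p) ltac:(by rewrite -compA pm0 comp0r).
by rewrite (hu f erefl) (hu g (esym e)).
Qed.
Lemma coker_desc {X Y Z T : O} (m : H X Y) (p : H Y Z) (f : H Y T) :
  is_cokernel m p -> f \o_ m = 0 -> exists g : H Z T, g \o_ p = f.
Proof. by case=> _ hk e; have [g [eg _]] := hk T f e; exists g. Qed.

Lemma pushout_epi {B C1 C2 P T : O} (f : H B C1) (g : H B C2) (u1 : H C1 P)
  (u2 : H C2 P) (h h' : H P T) :
  is_pushout f g u1 u2 -> h \o_ u1 = h' \o_ u1 -> h \o_ u2 = h' \o_ u2 -> h = h'.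
Proof.
case=> e hp e1 e2.
have [k [_ hu]] := hp T (h \o_ u1) (h \o_ u2) ltac:(by rewrite -!compA e).
by rewrite (hu h (conj erefl erefl)) (hu h' (conj (esym e1) (esym e2))).
Qed.
Lemma pushout_desc {B C1 C2 P T : O} (f : H B C1) (g : H B C2) (u1 : H C1 P)
  (u2 : H C2 P) (x1 : H C1 T) (x2 : H C2 T) :
  is_pushout f g u1 u2 -> x1 \o_ f = x2 \o_ g ->
  exists h : H P T, h \o_ u1 = x1 /\ h \o_ u2 = x2.
Proof. by case=> _ hp e; have [h [[? ?] _]] := hp T x1 x2 e; exists h. Qed.
Lemma pushout_sym {B C1 C2 P : O} (f : H B C1) (g : H B C2) (u1 : H C1 P)
  (u2 : H C2 P) : is_pushout f g u1 u2 -> is_pushout g f u2 u1.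
Proof.
case=> e hp; split; first by rewrite e.
move=> T x1 x2 ex.
have [h [[h1 h2] hu]] := hp T x2 x1 (esym ex).
exists h; split => // h' [h'1 h'2]; exact: hu.
Qed.
Lemma pullback_mono {B C1 C2 P T : O} (f : H C1 B) (g : H C2 B) (v1 : H P C1)
  (v2 : H P C2) (h h' : H T P) :
  is_pullback f g v1 v2 -> v1 \o_ h = v1 \o_ h' -> v2 \o_ h = v2 \o_ h' -> h = h'.
Proof.
case=> e hp e1 e2.
have [k [_ hu]] := hp T (v1 \o_ h) (v2 \o_ h) ltac:(by rewrite !compA e).
by rewrite (hu h (conj erefl erefl)) (hu h' (conj (esym e1) (esym e2))).
Qed.
Lemma pullback_lift {B C1 C2 P T : O} (f : H C1 B) (g : H C2 B) (v1 : H P C1)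
  (v2 : H P C2) (x1 : H T C1) (x2 : H T C2) :
  is_pullback f g v1 v2 -> f \o_ x1 = g \o_ x2 ->
  exists h : H T P, v1 \o_ h = x1 /\ v2 \o_ h = x2.
Proof. by case=> _ hp e; have [h [[? ?] _]] := hp T x1 x2 e; exists h. Qed.

Lemma sec_of_ret {X Y Z : O} (i : H X Y) (q : H Y Z) (r : H Y X) :
  conflation i q -> r \o_ i = idm X -> exists s : H Z Y, q \o_ s = idm Z.
Proof.
move=> cq ri; have [hk hc] := conf_kc cq.
have [s es] := coker_desc (f := idm Y - i \o_ r) hc
  ltac:(by rewrite compBl comp1l -compA ri comp1r subrr).
exists s; apply: (coker_epi hc).
by rewrite -compA es compBr comp1r compA (conf0 cq) comp0l subr0 comp1l.
Qed.
Lemma ret_of_sec {X Y Z : O} (i : H X Y) (q : H Y Z) (s : H Z Y) :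
  conflation i q -> q \o_ s = idm Z -> split_conflation i q.
Proof.
move=> cq qs; have [hk hc] := conf_kc cq.
have [r er] := ker_lift (f := idm Y - s \o_ q) hk
  ltac:(by rewrite compBr comp1r compA qs comp1l subrr).
exists r; apply: (ker_mono hk).
by rewrite compA er compBl comp1l -compA (conf0 cq) comp0r subr0 comp1r.
Qed.

Lemma pb_conf {K Y Z Z' : O} (i : H K Y) (q : H Y Z) (f : H Z' Z) :
  conflation i q -> exists (Y' : O) (i' : H K Y') (q' : H Y' Z') (g : H Y' Y),
    [/\ conflation i' q', g \o_ i' = i & is_pullback q f g q'].
Proof.
move=> cq; have [hk hc] := conf_kc cq.
case: (ecat_exact C) => _ [hiso [_ [_ [_ [_ [_ hpb]]]]]].
have [P [p' [f' [pb [X0 [m0 cm0]]]]]] := hpb _ _ _ q f (ex_intro _ K (ex_intro _ i cq)).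
have [k [fk pk]] := pullback_lift (x1 := i) (x2 := 0) pb
  ltac:(by rewrite (conf0 cq) comp0r).
have [hk0 hc0] := conf_kc cm0.
have [x ex] := ker_lift (f := f' \o_ m0) hk
  ltac:(by rewrite compA (proj1 pb) -compA (conf0 cm0) comp0r).
have kx : k \o_ x = m0.
  apply: (pullback_mono pb); first by rewrite compA fk ex.
  by rewrite compA pk comp0l (conf0 cm0).
have [y ey] := ker_lift hk0 pk.
exists P, k, p', f'; split => //.
have isoid : forall A : O, is_iso (idm A).
  by move=> A; exists (idm A); rewrite comp1l.
apply: (hiso _ _ _ m0 p' _ _ _ k p' x (idm P) (idm Z') cm0) => //.
- exists y; split.
  + by apply: (ker_mono hk0); rewrite compA ey kx comp1r.
  + by apply: (ker_mono hk); rewrite compA ex -compA ey fk comp1r.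
- by rewrite comp1l kx.
- by rewrite comp1l comp1r.
Qed.

Lemma po_exists {B C1 C2 A2 : O} (m1 : H B C1) (m2 : H B C2) (p2 : H C2 A2) :
  conflation m2 p2 -> exists (P : O) (u1 : H C1 P) (u2 : H C2 P),
    is_pushout m1 m2 u1 u2.
Proof.
move=> cm2.
case: (ecat_exact C) => _ [_ [_ [_ [_ [_ [hpo _]]]]]].
have [P [m' [f' [po _]]]] := hpo _ _ _ m2 m1 (ex_intro _ A2 (ex_intro _ p2 cm2)).
by exists P, m', f'; apply: pushout_sym.
Qed.

Lemma po_infl {B C1 C2 P A1 A2 : O} (m1 : H B C1) (m2 : H B C2) (p1 : H C1 A1)
  (p2 : H C2 A2) (u1 : H C1 P) (u2 : H C2 P) :
  conflation m1 p1 -> conflation m2 p2 -> is_pushout m1 m2 u1 u2 ->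
  exists (A0 : O) (p0 : H P A0), conflation (u1 \o_ m1) p0.
Proof.
move=> cm1 cm2 po.
case: (ecat_exact C) => _ [hiso [_ [_ [_ [hinf [hpo _]]]]]].
have [P' [m' [f' [po' [Z [p cm']]]]]] :=
  hpo _ _ _ m2 m1 (ex_intro _ A2 (ex_intro _ p2 cm2)).
have [phi [phi1 phi2]] := pushout_desc (x1 := u2) (x2 := u1) po' (esym (proj1 po)).
have [psi [psi1 psi2]] := pushout_desc (x1 := m') (x2 := f') po (esym (proj1 po')).
have psiphi : psi \o_ phi = idm P'.
  apply: (pushout_epi po').
  - by rewrite -compA phi1 psi2 comp1l.
  - by rewrite -compA phi2 psi1 comp1l.
have phipsi : phi \o_ psi = idm P.
  apply: (pushout_epi po).
  - by rewrite -compA psi1 phi2 comp1l.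
  - by rewrite -compA psi2 phi1 comp1l.
have cu1 : conflation u1 (p \o_ psi).
  apply: (hiso _ _ _ m' p _ _ _ u1 (p \o_ psi) (idm C1) phi (idm Z) cm').
  - by exists (idm C1); rewrite comp1l.
  - by exists psi.
  - by exists (idm Z); rewrite comp1l.
  - by rewrite phi2 comp1r.
  - by rewrite -compA psiphi comp1r comp1l.
exact: (hinf _ _ _ m1 u1 (ex_intro _ A1 (ex_intro _ p1 cm1))
          (ex_intro _ Z (ex_intro _ (p \o_ psi) cu1))).
Qed.

Lemma ext_lift (M : forall A B : O, H A B -> Prop) {A0 A1 A1' A' B0 B1 Cc D X : O}
  (a : H A0 A') (a1 : H A1 A1') (al : H A1 A0) (be : H A1' A')
  (j : H B0 B1) (i : H B0 Cc) (qE : H Cc A') (i' : H B1 D) (q' : H D A')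
  (c' : H Cc D) (i'' : H B1 X) (q'' : H X A0) (x : H X D) :
  ext_perp M a1 -> M B0 B1 j -> a \o_ al = be \o_ a1 ->
  conflation i qE -> conflation i' q' -> c' \o_ i = i' \o_ j ->
  q' \o_ c' = idm A' \o_ qE ->
  conflation i'' q'' -> x \o_ i'' = i' \o_ idm B1 -> q' \o_ x = a \o_ q'' ->
  exists s : H A1 X, q'' \o_ s = al.
Proof.
move=> pa Mj eaa cE cF e1 e2 cG e3 e4.
have [CE1 [iE1 [qE1 [gE [cE1 gEi pbE]]]]] := pb_conf be cE.
have [DF1 [iF1 [qF1 [gF [cF1 gFi pbF]]]]] := pb_conf be cF.
have [X1 [iG1 [qG1 [gG [cG1 gGi pbG]]]]] := pb_conf al cG.
have [c1 [gFc1 qFc1]] := pullback_lift (x1 := c' \o_ gE) (x2 := qE1) pbF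
  ltac:(by rewrite compA e2 comp1l (proj1 pbE)).
have [x1 [gFx1 qFx1]] := pullback_lift (x1 := x \o_ gG) (x2 := a1 \o_ qG1) pbF
  ltac:(by rewrite compA e4 -compA (proj1 pbG) compA eaa -compA).
have [r rG] : split_conflation iG1 qG1.
  apply: (pa B0 B1 j Mj CE1 iE1 qE1 cE1 DF1 iF1 qF1 cF1 c1 _ _ X1 iG1 qG1 cG1 x1).
  - apply: (pullback_mono pbF).
    + by rewrite !compA gFc1 gFi -compA gEi e1.
    + by rewrite !compA qFc1 (conf0 cE1) (conf0 cF1) !comp0l.
  - by rewrite comp1l.
  - rewrite comp1r; apply: (pullback_mono pbF).
    + by rewrite compA gFx1 -compA gGi e3 comp1r gFi.
    + by rewrite compA qFx1 -compA (conf0 cG1) comp0r (conf0 cF1).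
  - exact: qFx1.
have [t et] := sec_of_ret cG1 rG.
exists (gG \o_ t).
by rewrite compA (proj1 pbG) -compA et comp1r.
Qed.

Lemma ext_sum (M1 M2 : forall A B : O, H A B -> Prop) {A0 A1 A2 A1' A2' A' : O}
  (a : H A0 A') (a1 : H A1 A1') (a2 : H A2 A2') (al1 : H A1 A0) (al2 : H A2 A0)
  (be1 : H A1' A') (be2 : H A2' A') (s1 : H A0 A1) (s2 : H A0 A2) :
  ext_perp M1 a1 -> ext_perp M2 a2 -> a \o_ al1 = be1 \o_ a1 ->
  a \o_ al2 = be2 \o_ a2 -> al1 \o_ s1 + al2 \o_ s2 = idm A0 ->
  ext_perp (fun A B f => M1 A B f /\ M2 A B f) a.
Proof.
move=> p1 p2 e1 e2 es B0 B1 j [Mj1 Mj2] Cc i qE cE D i' q' cF c' f1 f2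
  X i'' q'' cG x f3 f4.
have [t1 et1] := ext_lift p1 Mj1 e1 cE cF f1 f2 cG f3 f4.
have [t2 et2] := ext_lift p2 Mj2 e2 cE cF f1 f2 cG f3 f4.
apply: (ret_of_sec (s := t1 \o_ s1 + t2 \o_ s2) cG).
by rewrite compDr !compA et1 et2.
Qed.

End Lemmas.

Theorem theorem3p1 (C : ExactCat) (J1 J2 : ideal C) :
  special_preenveloping J1 -> special_preenveloping J2 ->
  special_preenveloping (ideal_cap J1 J2) /\
  (forall (B C1 C2 : cObj C) (m1 : chom B C1) (m2 : chom B C2),
     special_preenvelope J1 m1 -> special_preenvelope J2 m2 ->
     forall (P : cObj C) (u1 : chom C1 P) (u2 : chom C2 P),
       is_pushout m1 m2 u1 u2 ->
       special_preenvelope (ideal_cap J1 J2) (u1 \o_ m1)).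
Proof.
move=> h1 h2.
have part2 : forall (B C1 C2 : cObj C) (m1 : chom B C1) (m2 : chom B C2),
     special_preenvelope J1 m1 -> special_preenvelope J2 m2 ->
     forall (P : cObj C) (u1 : chom C1 P) (u2 : chom C2 P),
       is_pushout m1 m2 u1 u2 ->
       special_preenvelope (ideal_cap J1 J2) (u1 \o_ m1).
  move=> B C1 C2 m1 m2
    [J1m1 [A1 [p1 [cm1 [D1 [A1' [n1 [q1 [cn1 [c1 [a1 [ec1 [ea1 pa1]]]]]]]]]]]]]
    [J2m2 [A2 [p2 [cm2 [D2 [A2' [n2 [q2 [cn2 [c2 [a2 [ec2 [ea2 pa2]]]]]]]]]]]]]
    P u1 u2 po.
  rewrite comp1r in ec1; rewrite comp1r in ec2.
  split.
    case: (idl_ideal J1) => _ [_ [hl1 _]]; case: (idl_ideal J2) => _ [_ [hl2 _]].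
    split; first exact: hl1.
    by rewrite (proj1 po); apply: hl2.
  have [A0 [p0 cp0]] := po_infl cm1 cm2 po.
  have [Q [v1 [v2 poQ]]] := po_exists n1 cn2.
  have [A' [q cq]] := po_infl cn1 cn2 poQ.
  have [c [cu1 cu2]] := pushout_desc (x1 := v1 \o_ c1) (x2 := v2 \o_ c2) po
    ltac:(by rewrite -!compA ec1 ec2 (proj1 poQ)).
  have cm : c \o_ (u1 \o_ m1) = v1 \o_ n1 by rewrite compA cu1 -compA ec1.
  have [_ hc0] := conf_kc cp0.
  have [a ea] := coker_desc (f := q \o_ c) hc0 ltac:(by rewrite -compA cm (conf0 cq)).
  exists A0, p0; split => //.
  exists Q, A', (v1 \o_ n1), q; split => //.
  exists c, a; split; first by rewrite comp1r.
  split; first exact: ea.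
  have [_ hc1] := conf_kc cm1; have [_ hc2] := conf_kc cm2.
  have [_ hd1] := conf_kc cn1; have [_ hd2] := conf_kc cn2.
  have [al1 eal1] := coker_desc (f := p0 \o_ u1) hc1
    ltac:(by rewrite -compA (conf0 cp0)).
  have [al2 eal2] := coker_desc (f := p0 \o_ u2) hc2
    ltac:(by rewrite -compA -(proj1 po) (conf0 cp0)).
  have [be1 ebe1] := coker_desc (f := q \o_ v1) hd1
    ltac:(by rewrite -compA (conf0 cq)).
  have [be2 ebe2] := coker_desc (f := q \o_ v2) hd2
    ltac:(by rewrite -compA -(proj1 poQ) (conf0 cq)).
  have [t1 [t1u1 t1u2]] := pushout_desc (x1 := p1) (x2 := 0) po
    ltac:(by rewrite comp0l (conf0 cm1)).
  have [t2 [t2u1 t2u2]] := pushout_desc (x1 := 0) (x2 := p2) po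
    ltac:(by rewrite comp0l (conf0 cm2)).
  have [s1 es1] := coker_desc (f := t1) hc0 ltac:(by rewrite compA t1u1 (conf0 cm1)).
  have [s2 es2] := coker_desc (f := t2) hc0
    ltac:(by rewrite (proj1 po) compA t2u2 (conf0 cm2)).
  apply: (ext_sum (al1 := al1) (al2 := al2) (be1 := be1) (be2 := be2)
            (s1 := s1) (s2 := s2) pa1 pa2).
  - apply: (coker_epi hc1).
    by rewrite -!compA eal1 ea1 compA ea -compA cu1 !compA ebe1.
  - apply: (coker_epi hc2).
    by rewrite -!compA eal2 ea2 compA ea -compA cu2 !compA ebe2.
  - apply: (coker_epi hc0).
    rewrite compDl -!compA es1 es2 comp1l.
    apply: (pushout_epi po).
    + by rewrite compDl -!compA t1u1 t2u1 comp0r addr0 eal1.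
    + by rewrite compDl -!compA t1u2 t2u2 comp0r add0r eal2.
split => //.
move=> B.
have [C1 [m1 s1]] := h1 B; have [C2 [m2 s2]] := h2 B.
have [_ [A2 [p2 [cm2 _]]]] := s2.
have [P [u1 [u2 po]]] := po_exists m1 cm2.
exists P, (u1 \o_ m1); exact: part2 s1 s2 P u1 u2 po.
Qed.
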